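(* Let $f=\frac1n\sum_{z=1}^nf_z$ be twice differentiable, let $x_0\in\mathbb{R}^d$, $H=\nabla^2f(x_0)$, and suppose $\lambda_{\min}(H)=-\lambda<0$ with unit eigenvector $v$, and that the CNC condition holds at $x_0$: $\mathbb{E}_z[(v^T\nabla f_z(x_0))^2]\ge\tau$ for $z$ uniform on $[n]$. Let $x_1=x_0-r\nabla f_z(x_0)$ with $z$ uniform on $[n]$, let $\eta>0$, $\kappa=1+\eta\lambda$, and $u_t=(I-\eta H)^t(x_1-x_0)$. Then for every $t\ge0$, $$\mathbb{E}[\|u_t\|^2]\ge\tau r^2\kappa^{2t}.$$ *)

(* Defs.v *)
From HB Require Import structures.
From mathcomp Require Import all_boot all_order all_algebra.
From mathcomp Require Import all_classical all_reals all_analysis.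
Set Implicit Arguments. Unset Strict Implicit. Unset Printing Implicit Defensive.
Import Order.TTheory GRing.Theory Num.Theory.
Import numFieldNormedType.Exports.
Local Open Scope ring_scope.

Definition basis_vec (R : realType) (d : nat) (i : 'I_d) : 'cV[R]_d :=
  delta_mx i ord0.

Definition grad (R : realType) (d : nat) (f : 'cV[R]_d -> R) (x : 'cV[R]_d)
  : 'cV[R]_d := \col_i ('D_(@basis_vec R d i) f x).

Definition hessian (R : realType) (d : nat) (f : 'cV[R]_d -> R) (x : 'cV[R]_d)
  : 'M[R]_d := \matrix_(i, j) ('D_(@basis_vec R d j) (fun y => grad f y i ord0) x).

Definition twice_differentiable (R : realType) (d : nat) (f : 'cV[R]_d -> R) :=
  forall x, differentiable f x /\ differentiable (grad f) x.

Definition sqnorm (R : realType) (d : nat) (u : 'cV[R]_d) : R :=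
  \sum_i (u i ord0) ^+ 2.

Definition is_lambda_min (R : realType) (d : nat) (H : 'M[R]_d) (m : R) :=
  eigenvalue H m /\ forall mu, eigenvalue H mu -> m <= mu.

Definition avg (R : realType) (n : nat) (g : 'I_n -> R) : R :=
  n%:R^-1 * \sum_(z < n) g z.

(* Main.v *)
Set Warnings "-all".
Require Import Defs.
From HB Require Import structures.
From mathcomp Require Import all_boot all_order all_algebra.
From mathcomp Require Import all_classical all_reals all_analysis.
From mathcomp Require Import lra ring.
Import Order.TTheory GRing.Theory Num.Theory.
Import numFieldNormedType.Exports.
Local Open Scope ring_scope.
Local Open Scope classical_set_scope.

Lemma aux4 (R : realFieldType) (X : R) : 0 < X -> X <= X / 4 + X / 4 -> False.
Proof. move=> *; lra. Qed.

Section S.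
Context (R : realType) (V : normedModType R).

Lemma rem_bound (phi : V -> R) x : differentiable phi x ->
  forall eps, 0 < eps -> exists2 del, 0 < del & forall w, `|w| < del ->
   `|phi (w + x) - phi x - 'd phi x w| <= eps * `|w|.
Proof.
move=> /diff_locally dx eps e0.
have := (proj1 (eqaddoP _ _ _ _) dx) eps e0.
move=> /nbhs_norm0P [del del0 H]; exists del => // w wd.
by have := H w wd; rewrite /= opprD addrA.
Qed.

Lemma dir_is_derive (f : V -> R) (a y : V) (s : R) :
  differentiable f (s *: a + y) ->
  is_derive s 1 (fun t : R => f (t *: a + y)) ('D_a f (s *: a + y)).
Proof.
move=> df.
have key : (fun h : R => h^-1 *: (((fun t : R => f (t *: a + y)) \o shift s) (h *: 1) - f (s *: a + y)))
  = (fun h : R => h^-1 *: ((f \o shift (s *: a + y)) (h *: a) - f (s *: a + y))).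
  by apply/funext => h /=; rewrite [h *: 1]mulr1 scalerDl addrA.
split; first by rewrite /derivable key; exact: diff_derivable.
by rewrite /derive key.
Qed.

Lemma delta_bound (f : V -> R) (a b x : V) :
  (forall y, differentiable f y) ->
  differentiable (fun y => 'D_a f y) x ->
  forall eps, 0 < eps -> exists2 del, 0 < del & forall h : R, 0 < h -> h < del ->
   `|f (h *: a + (h *: b + x)) - f (h *: a + x) - f (h *: b + x) + f x
     - h ^+ 2 * 'D_b (fun y => 'D_a f y) x| <= eps * h ^+ 2.
Proof.
move=> df dphi eps e0.
set phi := fun y => 'D_a f y.
set c := 'D_b phi x.
set L := 'd phi x.
have cE : c = L b by rewrite /c /L deriveE.
set K := 2 * `|a| + `|b| + 1.
have na := normr_ge0 a; have nb := normr_ge0 b.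
have K0 : 0 < K by rewrite /K; lra.
have [d0 d00 Hd] := rem_bound _ _ dphi _ (divr_gt0 e0 K0).
have A0 : 0 < `|a| + `|b| + 1 by lra.
exists (d0 / (`|a| + `|b| + 1)); first by apply: divr_gt0.
move=> h h0 hd.
pose k := fun s : R => f (s *: a + (h *: b + x)) - f (s *: a + x) - (h * c) *: s.
pose dk := fun s : R => phi (s *: a + (h *: b + x)) - phi (s *: a + x) - h * c.
have kd : forall s : R, is_derive s 1 k (dk s).
  move=> s; rewrite /k /dk.
  apply: is_deriveB; first by apply: is_deriveB; apply: dir_is_derive.
  have := @is_deriveZ R R R id (h * c) s 1 1 (is_derive_id s 1).
  by rewrite [(h * c) *: 1]mulr1.
have kc : {within `[0, h], continuous k}.
  by apply: derivable_within_continuous => s _; exact: (@ex_derive _ _ _ _ _ _ _ (kd s)).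
have [xi xiin Hxi] := MVT h0 (fun s _ => kd s) kc.
have -> : f (h *: a + (h *: b + x)) - f (h *: a + x) - f (h *: b + x) + f x -
    h ^+ 2 * c = k h - k 0.
  rewrite /k !scale0r !add0r [(h * c) *: 0]mulr0 subr0 expr2.
  change ((h * c) *: h) with ((h * c) * h).
  ring.
rewrite Hxi subr0.
move: xiin; rewrite in_itv /= => /andP[xi0 xih].
set r1 := phi ((xi *: a + h *: b) + x) - phi x - L (xi *: a + h *: b).
set r2 := phi (xi *: a + x) - phi x - L (xi *: a).
have dkE : dk xi = r1 - r2.
  rewrite /r1 /r2.
  have -> : L (xi *: a + h *: b) = L (xi *: a) + h * L b.
    by rewrite linearD; congr (_ + _); rewrite linearZ.
  rewrite /dk addrA cE; ring.
have n1 : `|xi *: a + h *: b| <= h * (`|a| + `|b|).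
  apply: le_trans (ler_normD _ _) _.
  rewrite !normrZ (gtr0_norm xi0) (gtr0_norm h0) mulrDr lerD2r.
  by apply: ler_wpM2r => //; apply: ltW.
have n2 : `|xi *: a| <= h * `|a|.
  by rewrite normrZ (gtr0_norm xi0); apply: ler_wpM2r => //; apply: ltW.
have hK : h * (`|a| + `|b| + 1) < d0 by rewrite -ltr_pdivlMr.
have hab : h * (`|a| + `|b|) < d0.
  apply: le_lt_trans hK; rewrite ler_pM2l //; lra.
have ha : h * `|a| < d0.
  apply: le_lt_trans hab; rewrite ler_pM2l //; lra.
have H1 : `|r1| <= eps / K * `|xi *: a + h *: b| := Hd _ (le_lt_trans n1 hab).
have H2 : `|r2| <= eps / K * `|xi *: a| := Hd _ (le_lt_trans n2 ha).
set e' := eps / K in H1 H2.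
have e'0 : 0 < e' by apply: divr_gt0.
have e'K : e' * K = eps by rewrite /e' divfK // gt_eqF.
have H1' : `|r1| <= e' * (h * (`|a| + `|b|)).
  by apply: le_trans H1 _; apply: ler_wpM2l => //; apply: ltW.
have H2' : `|r2| <= e' * (h * `|a|).
  by apply: le_trans H2 _; apply: ler_wpM2l => //; apply: ltW.
have E : eps * h - (e' * (h * (`|a| + `|b|)) + e' * (h * `|a|)) = e' * h.
  by rewrite -e'K /K; ring.
have eh : 0 < e' * h by apply: mulr_gt0.
have B : `|dk xi| <= eps * h.
  rewrite dkE; apply: le_trans (ler_normB _ _) _; lra.
rewrite normrM (gtr0_norm h0) expr2 mulrA.
by apply: ler_wpM2r => //; apply: ltW.
Qed.

Lemma schwarz (f : V -> R) (a b x : V) :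
  (forall y, differentiable f y) ->
  differentiable ('D_a f) x -> differentiable ('D_b f) x ->
  'D_b ('D_a f) x = 'D_a ('D_b f) x.
Proof.
move=> df da db.
set c1 := 'D_b ('D_a f) x; set c2 := 'D_a ('D_b f) x.
apply/eqP; rewrite -subr_eq0 -normr_le0 leNgt; apply/negP => D0.
set D := `|c1 - c2| in D0.
have e0 : 0 < D / 4 by apply: divr_gt0.
have [d1 d10 H1] := delta_bound f a b x df da _ e0.
have [d2 d20 H2] := delta_bound f b a x df db _ e0.
have [m [m0 m1 m2]] : exists m, [/\ 0 < m, m <= d1 & m <= d2].
  by case: (leP d1 d2) => ?; [exists d1 | exists d2]; split => //; apply: ltW.
have h0 : 0 < m / 2 by apply: divr_gt0.
have hm : m / 2 < m by lra.
have := H1 _ h0 (lt_le_trans hm m1).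
have := H2 _ h0 (lt_le_trans hm m2).
set h := m / 2.
have -> : f (h *: b + (h *: a + x)) = f (h *: a + (h *: b + x)) by rewrite addrCA.
set Del := f (h *: a + (h *: b + x)) - _ - _ + _.
have -> : f (h *: a + (h *: b + x)) - f (h *: a + x) - f (h *: b + x) + f x = Del.
  rewrite /Del; ring.
move=> B2 B1.
have : `|(Del - h ^+ 2 * c2) - (Del - h ^+ 2 * c1)| <= D / 4 * h ^+ 2 + D / 4 * h ^+ 2.
  apply: le_trans (ler_normB _ _) _. exact: (lerD B2 B1).
have E : (Del - h ^+ 2 * c2) - (Del - h ^+ 2 * c1) = h ^+ 2 * (c1 - c2).
  clearbody Del c1 c2 h. ring.
rewrite E normrM -/D (ger0_norm (sqr_ge0 h)).
have hpos : 0 < h := h0.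
clearbody Del c1 c2 h D.
have hp : 0 < h ^+ 2 * D by rewrite mulr_gt0 // exprn_gt0.
have -> : D / 4 * h ^+ 2 = h ^+ 2 * D / 4 by ring.
move=> le; exact: (@aux4 R _ hp le).
Qed.
End S.

Lemma cs_ineq (R : realType) (d : nat) (u v : 'cV[R]_d) :
  sqnorm v = 1 -> ((v^T *m u) ord0 ord0) ^+ 2 <= sqnorm u.
Proof.
move=> nv.
set s := (v^T *m u) ord0 ord0.
have sE : s = \sum_i v i ord0 * u i ord0.
  by rewrite /s mxE; apply: eq_bigr => i _; rewrite mxE.
have H0 : 0 <= \sum_i (u i ord0 - s * v i ord0) ^+ 2.
  by apply: sumr_ge0 => i _; apply: sqr_ge0.
have E : \sum_i (u i ord0 - s * v i ord0) ^+ 2 =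
   \sum_i (u i ord0) ^+ 2 - (2 * s) * (\sum_i v i ord0 * u i ord0)
   + s ^+ 2 * (\sum_i (v i ord0) ^+ 2).
  rewrite !mulr_sumr -sumrB -big_split /=; apply: eq_bigr => i _; ring.
move: H0; rewrite E -sE.
have : \sum_i (v i ord0) ^+ 2 = 1 := nv.
move=> ->.
rewrite /sqnorm.
move: (\sum_i _ ) => X. move=> H0. lra.
Qed.

Local Close Scope classical_set_scope.

Theorem lemma30 (R : realType) (d n : nat) (fs : 'I_n -> 'cV[R]_d -> R)
  (x0 v : 'cV[R]_d) (lambda tau r eta : R) :
  (0 < n)%N ->
  let f := fun x => avg (fun z => fs z x) in
  let H := hessian f x0 in
  twice_differentiable f ->
  (forall z, differentiable (fs z) x0) ->
  0 < lambda ->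
  is_lambda_min H (- lambda) ->
  H *m v = (- lambda) *: v ->
  sqnorm v = 1 ->
  avg (fun z => ((v^T *m grad (fs z) x0) ord0 ord0) ^+ 2) >= tau ->
  0 < eta ->
  let kappa := 1 + eta * lambda in
  forall t : nat,
    avg (fun z =>
      let x1 := x0 - r *: grad (fs z) x0 in
      sqnorm ((1%:M - eta *: H) ^+ t *m (x1 - x0)))
    >= tau * r ^+ 2 * kappa ^+ (2 * t).
Proof.
move=> n0 f H tdf dfs lam0 _ Hv nv tauH eta0 kappa t.
have gE : forall k, (fun y => grad f y k ord0) = 'D_(@basis_vec R d k) f.
  by move=> k; apply/funext => y; rewrite /grad mxE.
have dgk : forall k, differentiable ('D_(@basis_vec R d k) f) x0.
  move=> k; rewrite -gE.
  exact: (differentiable_comp (tdf x0).2 (differentiable_coord (grad f x0) k ord0)).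
have HT : H^T = H.
  apply/matrixP => i j; rewrite mxE /H /hessian !mxE !gE.
  by apply: schwarz => // y; exact: (tdf y).1.
set M := 1%:M - eta *: H.
have MT : M^T = M by rewrite /M linearB /= trmx1 linearZ /= HT.
have Mv : M *m v = kappa *: v.
  by rewrite /M mulmxBl mul1mx -scalemxAl Hv scalerA /kappa scalerDl scale1r mulrN scaleNr opprK.
have vM : v^T *m M = kappa *: v^T.
  by rewrite -[v^T *m M]trmxK trmx_mul trmxK MT Mv linearZ.
have vMt : forall k, v^T *m M ^+ k = kappa ^+ k *: v^T.
  elim => [|k IH]; first by rewrite expr0 -idmxE mulmx1 scale1r.
  by rewrite exprSr -mulmxE mulmxA IH -scalemxAl vM scalerA -exprSr.
set C := r ^+ 2 * kappa ^+ (2 * t).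
have C0 : 0 <= C by rewrite /C mulnC exprM mulr_ge0 // sqr_ge0.
have key : forall z, C * ((v^T *m grad (fs z) x0) ord0 ord0) ^+ 2 <=
    sqnorm (M ^+ t *m (x0 - r *: grad (fs z) x0 - x0)).
  move=> z.
  apply: (le_trans _ (@cs_ineq R d _ v nv)).
  rewrite addrAC subrr add0r mulmxA vMt mulmxN -scalemxAr -scalemxAl.
  rewrite !mxE /C mulnC exprM.
  by rewrite sqrrN le_eqVlt; apply/orP; left; apply/eqP; ring.
apply: (@le_trans _ _ (avg (fun z => C * ((v^T *m grad (fs z) x0) ord0 ord0) ^+ 2))).
  rewrite -mulrA -/C mulrC.
  have -> : avg (fun z => C * ((v^T *m grad (fs z) x0) ord0 ord0) ^+ 2)
     = C * avg (fun z => ((v^T *m grad (fs z) x0) ord0 ord0) ^+ 2).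
    by rewrite /avg -mulr_sumr mulrCA.
  exact: ler_wpM2l.
rewrite /avg; apply: ler_wpM2l; first by rewrite invr_ge0 ler0n.
by apply: ler_sum => z _; exact: key.
Qed.
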